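(* Let $\mathcal{X},\mathcal{Y}$ be finite Markov chains, $C:{\bm X}\times{\bm Y}\to\mathbb{R}_+$ a cost function, and $\delta\in(0,1]$. Let $T^\infty_\delta$ be a random variable with $\Pr(T^\infty_\delta=t)=\delta(1-\delta)^t$ for $t\in\mathbb{N}$. Then $$d^{\delta,(\infty)}_{\mathrm{WL}}(\mathcal{X},\mathcal{Y};C)=\min_{(X_t,Y_t)_{t\in\mathbb{N}}\in\Pi_{\mathrm H}(\mathcal{X},\mathcal{Y})}\mathbb{E}\,C(X_{T^\infty_\delta},Y_{T^\infty_\delta}),$$ where $T^\infty_\delta$ is independent of the coupling, and in particular the minimum is attained.
   Context: A finite Markov chain $\mathcal{X}=({\bm X},m^{\bm X}_\bullet,\nu^{\bm X})$ consists of a finite set ${\bm X}$, a transition kernel $m^{\bm X}_\bullet:{\bm X}\to\mathcal{P}({\bm X})$ and an initial distribution $\nu^{\bm X}$. $\mathcal{C}(\alpha,\beta)$ denotes the set of couplings of $\alpha,\beta$. A Markovian coupling between $\mathcal{X}$ and $\mathcal{Y}$ is a (possibly time-inhomogeneous) Markov chain $(X_t,Y_t)_{t\in\mathbb{N}}$ on ${\bm X}\times{\bm Y}$ with $\mathrm{law}(X_0,Y_0)\in\mathcal{C}(\nu^{\bm X},\nu^{\bm Y})$ and, for all $t,x,y$, the conditional law of $(X_{t+1},Y_{t+1})$ given $(X_t,Y_t)=(x,y)$ in $\mathcal{C}(m^{\bm X}_x,m^{\bm Y}_y)$; $\Pi(\mathcal{X},\mathcal{Y})$ is the set of Markovian couplings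 and $\Pi_{\mathrm H}(\mathcal{X},\mathcal{Y})$ the subset of time homogeneous ones (conditional laws independent of $t$). The depth-$\infty$ $\delta$-discounted WL distance is $d^{\delta,(\infty)}_{\mathrm{WL}}(\mathcal{X},\mathcal{Y};C)=\inf_{(X_t,Y_t)\in\Pi(\mathcal{X},\mathcal{Y})}\mathbb{E}\big[\sum_{t=0}^{\infty}\delta(1-\delta)^tC(X_t,Y_t)\big]$. *)

(* Defs.v *)
From HB Require Import structures.
From mathcomp Require Import all_boot all_order all_algebra.
From mathcomp Require Import all_classical all_reals.
From mathcomp Require Import topology normedtype sequences.
Set Implicit Arguments. Unset Strict Implicit. Unset Printing Implicit Defensive.
Import Order.TTheory GRing.Theory Num.Theory numFieldNormedType.Exports.
Local Open Scope ring_scope.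
Local Open Scope classical_set_scope.

Section Defs.
Variable R : realType.

Definition is_dist (T : finType) (p : {ffun T -> R}) : Prop :=
  (forall x, 0 <= p x) /\ \sum_(x : T) p x = 1.

Record markov_chain := MarkovChain {
  mc_state : finType;
  mc_kernel : mc_state -> {ffun mc_state -> R};
  mc_init : {ffun mc_state -> R};
  mc_kernel_dist : forall x, is_dist (mc_kernel x);
  mc_init_dist : is_dist mc_init }.

Definition is_coupling (X Y : finType) (alpha : {ffun X -> R}) (beta : {ffun Y -> R})
  (pi : {ffun X * Y -> R}) : Prop :=
  is_dist pi /\
  (forall x, \sum_(y : Y) pi (x, y) = alpha x) /\
  (forall y, \sum_(x : X) pi (x, y) = beta y).

Record chain_on (X Y : finType) := ChainOn {
  ch_init : {ffun X * Y -> R};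
  ch_kernel : nat -> X * Y -> {ffun X * Y -> R} }.

Definition markovian_coupling (cX cY : markov_chain)
  (c : chain_on (mc_state cX) (mc_state cY)) : Prop :=
  is_coupling (mc_init cX) (mc_init cY) (ch_init c) /\
  forall t x y, is_coupling (mc_kernel x) (mc_kernel y) (ch_kernel c t (x, y)).

Definition homogeneous_markovian_coupling (cX cY : markov_chain)
  (c : chain_on (mc_state cX) (mc_state cY)) : Prop :=
  markovian_coupling c /\ forall t z, ch_kernel c t z = ch_kernel c 0 z.

Fixpoint chain_law (X Y : finType) (c : chain_on X Y) (t : nat) : {ffun X * Y -> R} :=
  match t with
  | 0 => ch_init c
  | t'.+1 => [ffun z' => \sum_(z : X * Y) chain_law c t' z * ch_kernel c t' z z']
  end.

Definition expected_cost_at (X Y : finType) (c : chain_on X Y) (C : X -> Y -> R)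
  (t : nat) : R :=
  \sum_(z : X * Y) chain_law c t z * C z.1 z.2.

Definition geom_law (delta : R) (t : nat) : R := delta * (1 - delta) ^+ t.

(* E[ sum_t delta (1-delta)^t C(X_t, Y_t) ] (expectation and nonnegative
   series exchanged), and, equally, E[C(X_T, Y_T)] with T independent of
   the coupling and distributed as geom_law delta. *)
Definition discounted_cost (X Y : finType) (c : chain_on X Y) (C : X -> Y -> R)
  (delta : R) : R :=
  limn (series (fun t => geom_law delta t * expected_cost_at c C t)).

Definition cost_at_geometric_time (X Y : finType) (c : chain_on X Y)
  (C : X -> Y -> R) (delta : R) : R :=
  limn (series (fun t => geom_law delta t * expected_cost_at c C t)).

Definition dWL_inf (cX cY : markov_chain) (C : mc_state cX -> mc_state cY -> R)
  (delta : R) : R :=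
  inf [set v | exists c : chain_on (mc_state cX) (mc_state cY),
         markovian_coupling c /\ v = discounted_cost c C delta].

End Defs.

(* Main.v *)
Require Import Defs.
From HB Require Import structures.
From mathcomp Require Import all_boot all_order all_algebra.
From mathcomp Require Import all_classical all_reals.
From mathcomp Require Import topology normedtype sequences.
From mathcomp Require Import derive ring.
Import Order.TTheory GRing.Theory Num.Theory numFieldNormedType.Exports.
Local Open Scope ring_scope.
Local Open Scope classical_set_scope.
Set Implicit Arguments. Unset Strict Implicit. Unset Printing Implicit Defensive.


HB.instance Definition _ (R : realType) (m n : nat) :=
  Uniform_isComplete.Build 'M[R]_(m,n) (@mx_complete R m n).

Section Coupling.
Variable R : realType.

Lemma cl_pre (T U : topologicalType) (A : set T) (g : T -> U) (F : set U) :
  continuous g -> closed F -> (forall v, A v -> F (g v)) ->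
  forall v, closure A v -> F (g v).
Proof.
move=> cg cF AF v Av.
have cl : closed (g @^-1` F) by move/continuous_closedP : cg; apply.
have := closureS (AF : A `<=` g @^-1` F).
by rewrite -(proj1 (closure_id _) cl); apply.
Qed.

Lemma cont_sum (N : nat) (J : Type) (r : seq J) (h : J -> 'rV[R]_N -> R) :
  (forall j, continuous (h j)) ->
  continuous (fun v => \sum_(j <- r) h j v).
Proof.
move=> hc; elim: r => [|a r IH].
  rewrite (_ : (fun v => _) = (fun=> 0)); first by move=> v; exact: cst_continuous.
  by apply: funext => v; rewrite big_nil.
rewrite (_ : (fun v => _) = (h a + (fun v => \sum_(j <- r) h j v))); last first.
  by apply: funext => v; rewrite big_cons.
by move=> v; apply: continuousD; [exact: hc | exact: IH].
Qed.

Variables (X Y : finType).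
Local Notation N := #|{: X * Y}|.
Definition toF (v : 'rV[R]_N) (z : X * Y) : R := v ord0 (enum_rank z).
Definition ofF (f : X * Y -> R) : 'rV[R]_N := \row_i f (enum_val i).
Lemma toFK f z : toF (ofF f) z = f z.
Proof. by rewrite /toF /ofF mxE enum_rankK. Qed.

Lemma cont_toF z : continuous (fun v => toF v z).
Proof. exact: coord_continuous. Qed.

Lemma coupling_min (al : {ffun X -> R}) (be : {ffun Y -> R}) :
  is_dist al -> is_dist be -> forall f : X * Y -> R,
  exists pi, is_coupling al be pi /\
    forall pi', is_coupling al be pi' ->
      \sum_z pi z * f z <= \sum_z pi' z * f z.
Proof.
move=> [al0 al1] [be0 be1] f.
pose A := [set v : 'rV[R]_N | is_coupling al be [ffun z => toF v z]].
have A0 : A !=set0.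
  exists (ofF (fun z => al z.1 * be z.2)); rewrite /A /=.
  split; [split|split].
  - by move=> z; rewrite ffunE toFK mulr_ge0.
  - under eq_bigr do rewrite ffunE toFK.
    rewrite -(pair_big predT predT (fun x y => al x * be y)) /=.
    rewrite -al1; apply: eq_bigr => i _.
    by rewrite -big_distrr /= be1 mulr1.
  - by move=> x; under eq_bigr do rewrite ffunE toFK /=; rewrite -big_distrr /= be1 mulr1.
  - by move=> y; under eq_bigr do rewrite ffunE toFK /=; rewrite -big_distrl /= al1 mul1r.
have clA : closed A.
  rewrite closure_id; apply/seteqP; split; first exact: subset_closure.
  move=> v Av; split; [split|split].
  - move=> z; rewrite ffunE.
    apply: (@cl_pre _ _ A (fun v => toF v z) [set x | 0 <= x] (cont_toF (z:=z)) (@closed_ge R 0) _ v Av).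
    by move=> w [[+ _] _] => /(_ z); rewrite ffunE.
  - under eq_bigr do rewrite ffunE.
    apply: (@cl_pre _ _ A (fun v => \sum_z toF v z) [set x | x = 1] _ (@closed_eq R 1) _ v Av).
    + by apply: cont_sum => j; exact: cont_toF.
    + by move=> w [[_ +] _]; under eq_bigr do rewrite ffunE.
  - move=> x; under eq_bigr do rewrite ffunE.
    apply: (@cl_pre _ _ A (fun v => \sum_y toF v (x, y)) [set r | r = al x] _ (@closed_eq R _) _ v Av).
    + by apply: cont_sum => j; exact: cont_toF.
    + by move=> w [_ [+ _]] => /(_ x); under eq_bigr do rewrite ffunE.
  - move=> y; under eq_bigr do rewrite ffunE.
    apply: (@cl_pre _ _ A (fun v => \sum_x toF v (x, y)) [set r | r = be y] _ (@closed_eq R _) _ v Av).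
    + by apply: cont_sum => j; exact: cont_toF.
    + by move=> w [_ [_ +]] => /(_ y); under eq_bigr do rewrite ffunE.
have cA : compact A.
  have cB := @rV_compact R N (fun=> `[(0:R), 1]%classic) (fun=> @segment_compact R 0 1).
  apply: (subclosed_compact clA cB).
  move=> v [[v0 v1] _] i /=.
  have := v0 (enum_val i); have := v1.
  rewrite ffunE /toF enum_valK => s1 vi0.
  rewrite in_itv /= vi0 /= -s1 (bigD1 (enum_val i)) //= ffunE /toF enum_valK lerDl.
  by apply: sumr_ge0 => z _; rewrite ffunE; have := v0 z; rewrite ffunE.
have cg : continuous (fun v => \sum_z toF v z * f z).
  apply: cont_sum => z v; apply: continuousM; first exact: cont_toF.
  exact: cst_continuous.
have [c cA' cmin] := compact_EVT_min A0 cA (continuous_subspaceT cg).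
exists [ffun z => toF c z]; split; first by rewrite inE in cA'.
move=> pi' cpi'.
have : ofF pi' \in A.
  rewrite inE /A /=.
  by rewrite (_ : [ffun z => toF (ofF pi') z] = pi') //; apply/ffunP => z; rewrite ffunE toFK.
move=> /cmin; under [X in _ <= X -> _]eq_bigr do rewrite toFK.
by move=> h; under eq_bigr do rewrite ffunE.
Qed.

End Coupling.


Section Norms.
Variable R : realType.
Variable N : nat.
Lemma coord_le_norm (v : 'rV[R]_N) i : `|v ord0 i| <= `|v|.
Proof.
rewrite [leRHS]/Num.norm /= mx_normrE.
exact: (le_bigmax _ (fun ij : 'I_1 * 'I_N => `|v ij.1 ij.2|) (ord0, i)).
Qed.
Lemma norm_le_coord (v : 'rV[R]_N) M : 0 <= M -> (forall i, `|v ord0 i| <= M) -> `|v| <= M.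
Proof.
move=> M0 H; rewrite [leLHS]/Num.norm /= mx_normrE.
apply: bigmax_le => // -[i j] _ /=; rewrite (ord1 i); exact: H.
Qed.
End Norms.

Section Main.
Variables (R : realType) (cX cY : markov_chain R).
Variables (C : mc_state cX -> mc_state cY -> R) (delta : R).
Hypotheses (hC : forall x y, 0 <= C x y) (hd0 : 0 < delta) (hd1 : delta <= 1).
Local Notation X := (mc_state cX).
Local Notation Y := (mc_state cY).
Local Notation S := (X * Y)%type.
Local Notation N := #|{: S}|.

Definition Cz (z : S) := C z.1 z.2.

Definition opt (V : S -> R) (z : S) : {ffun S -> R} :=
  proj1_sig (cid (coupling_min (@mc_kernel_dist R cX z.1) (@mc_kernel_dist R cY z.2) V)).

Lemma opt_coup V z : is_coupling (mc_kernel z.1) (mc_kernel z.2) (opt V z).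
Proof. by rewrite /opt; case: cid => pi [] /=. Qed.

Lemma opt_min V z pi : is_coupling (mc_kernel z.1) (mc_kernel z.2) pi ->
  \sum_w opt V z w * V w <= \sum_w pi w * V w.
Proof. by rewrite /opt; case: cid => pi' [] /= _; apply. Qed.

Definition mval (V : S -> R) z := \sum_w opt V z w * V w.

Lemma mval_lip1 U W z M : (forall w, `|U w - W w| <= M) -> mval U z - mval W z <= M.
Proof.
move=> H; have [[p0 p1] _] := opt_coup W z.
apply: (@le_trans _ _ (\sum_w opt W z w * U w - mval W z)).
  by rewrite lerD2r; apply: opt_min; exact: opt_coup.
rewrite /mval -sumrB.
under eq_bigr do rewrite -mulrBr.
apply: (@le_trans _ _ (\sum_w opt W z w * M)).
  apply: ler_sum => w _; apply: ler_wpM2l => //.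
  exact: le_trans (ler_norm _) (H w).
by rewrite -big_distrl /= p1 mul1r.
Qed.

Lemma mval_lip U W z M : (forall w, `|U w - W w| <= M) -> `|mval U z - mval W z| <= M.
Proof.
move=> H; rewrite ler_norml; apply/andP; split; last exact: mval_lip1.
rewrite lerNl opprB; apply: mval_lip1 => w; rewrite distrC; exact: H.
Qed.

Definition Fmap (v : 'rV[R]_N) : 'rV[R]_N :=
  \row_i (delta * Cz (enum_val i) + (1 - delta) * mval (toF v) (enum_val i)).

Lemma F_lip u w : `|Fmap u - Fmap w| <= (1 - delta) * `|u - w|.
Proof.
apply: norm_le_coord; first by rewrite mulr_ge0 // subr_ge0.
move=> i; rewrite !mxE opprD addrACA subrr add0r -mulrBr normrM ger0_norm ?subr_ge0 //.
apply: ler_wpM2l; first by rewrite subr_ge0.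
apply: mval_lip => z; rewrite /toF.
by apply: le_trans (coord_le_norm _ (enum_rank z)); rewrite !mxE.
Qed.

Lemma exists_fix : exists p : 'rV[R]_N, p = Fmap p.
Proof.
have q1 : 0 <= 1 - delta by rewrite subr_ge0.
have ctr : contraction (interval_inference.NngNum q1) (totalfun_ setT Fmap).
  split; first by rewrite /= ltrBlDr ltrDl.
  by move=> [u w] _ /=; apply: F_lip.
have ictr : is_contraction (totalfun_ setT Fmap) by exists (interval_inference.NngNum q1).
have [p _ hp] := banach_fixed_point ictr closedT (ex_intro _ 0 I).
by exists p.
Qed.
End Main.


Section Chains.
Variables (R : realType) (cX cY : markov_chain R).
Variables (C : mc_state cX -> mc_state cY -> R) (delta : R).
Hypotheses (hC : forall x y, 0 <= C x y) (hd0 : 0 < delta) (hd1 : delta <= 1).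
Local Notation X := (mc_state cX).
Local Notation Y := (mc_state cY).
Local Notation S := (X * Y)%type.
Variable V : S -> R.
Hypothesis hV : forall z, V z = delta * Cz C z + (1 - delta) * mval V z.
Variable MV : R.
Hypothesis hMV : forall z, `|V z| <= MV.

Lemma series0' (u : R ^nat) : series u 0 = 0.
Proof. by rewrite seriesEnat /= big_mkord big_ord0. Qed.

Lemma kern_coup (c : chain_on R X Y) : markovian_coupling c -> forall t z,
  is_coupling (mc_kernel z.1) (mc_kernel z.2) (ch_kernel c t z).
Proof. by move=> mc t [x y]; exact: mc.2. Qed.

Lemma law_dist (c : chain_on R X Y) : markovian_coupling c -> forall t,
  (forall z, 0 <= chain_law c t z) /\ \sum_z chain_law c t z = 1.
Proof.
move=> mc; elim=> [|t [L0 L1]]; first exact: mc.1.1.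
split.
  move=> z'; rewrite /= ffunE; apply: sumr_ge0 => z _; apply: mulr_ge0 => //.
  exact: (kern_coup mc t z).1.1.
rewrite /=; under eq_bigr do rewrite ffunE.
rewrite exchange_big /= -L1; apply: eq_bigr => z _.
by rewrite -big_distrr /= (kern_coup mc t z).1.2 mulr1.
Qed.

Lemma law_succ_V (c : chain_on R X Y) t :
  \sum_w chain_law c t.+1 w * V w =
  \sum_z chain_law c t z * \sum_w ch_kernel c t z w * V w.
Proof.
rewrite /=; under eq_bigr do rewrite ffunE big_distrl /=.
rewrite exchange_big /=; apply: eq_bigr => z _.
rewrite big_distrr /=; apply: eq_bigr => w _; by rewrite mulrA.
Qed.

Definition bV (c : chain_on R X Y) t := \sum_z chain_law c t z * V z.

Lemma b_eq (c : chain_on R X Y) t : bV c t =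
  delta * expected_cost_at c C t + (1 - delta) * \sum_z chain_law c t z * mval V z.
Proof.
rewrite /bV /expected_cost_at; under eq_bigr do rewrite hV mulrDr.
rewrite big_split /= !big_distrr /=; congr (_ + _); apply: eq_bigr => z _;
  rewrite /Cz; ring.
Qed.

Lemma step_le (c : chain_on R X Y) : markovian_coupling c -> forall t,
  bV c t <= delta * expected_cost_at c C t + (1 - delta) * bV c t.+1.
Proof.
move=> mc t; rewrite b_eq /bV law_succ_V lerD2l.
apply: ler_wpM2l; first by rewrite subr_ge0.
apply: ler_sum => z _; apply: ler_wpM2l; first exact: (law_dist mc t).1.
exact: opt_min (kern_coup mc t z).
Qed.

Lemma step_eq (c : chain_on R X Y) : (forall t z, ch_kernel c t z = opt V z) -> forall t,
  bV c t = delta * expected_cost_at c C t + (1 - delta) * bV c t.+1.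
Proof.
move=> hK t; rewrite b_eq /bV law_succ_V; congr (_ + _ * _).
by apply: eq_bigr => z _; rewrite hK.
Qed.

Lemma tele_le (c : chain_on R X Y) : markovian_coupling c -> forall n,
  bV c 0 <= series (fun t => geom_law delta t * expected_cost_at c C t) n
            + (1 - delta) ^+ n * bV c n.
Proof.
move=> mc; elim=> [|n IH]; first by rewrite series0' add0r expr0 mul1r.
apply: (le_trans IH); rewrite seriesSr -addrA lerD2l.
have q0 : 0 <= (1 - delta) ^+ n by rewrite exprn_ge0 // subr_ge0.
apply: le_trans (ler_wpM2l q0 (step_le mc n)) _.
by rewrite /geom_law exprSr le_eqVlt; apply/orP; left; apply/eqP; ring.
Qed.

Lemma tele_eq (c : chain_on R X Y) : (forall t z, ch_kernel c t z = opt V z) -> forall n,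
  bV c 0 = series (fun t => geom_law delta t * expected_cost_at c C t) n
            + (1 - delta) ^+ n * bV c n.
Proof.
move=> hK; elim=> [|n IH]; first by rewrite series0' add0r expr0 mul1r.
rewrite IH seriesSr -addrA; congr (_ + _).
by rewrite (step_eq hK n) /geom_law exprSr; ring.
Qed.

Lemma b_bound (c : chain_on R X Y) : markovian_coupling c -> forall n, `|bV c n| <= MV.
Proof.
move=> mc n; have [L0 L1] := law_dist mc n.
apply: le_trans (ler_norm_sum _ _ _) _.
apply: (@le_trans _ _ (\sum_z chain_law c n z * MV)); last by rewrite -big_distrl /= L1 mul1r.
apply: ler_sum => z _; rewrite normrM ger0_norm //; exact: ler_wpM2l.
Qed.

Lemma u_cvg (c : chain_on R X Y) : markovian_coupling c ->
  (fun n => (1 - delta) ^+ n * bV c n) @ \oo --> (0:R).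
Proof.
move=> mc.
have q0 : 0 <= 1 - delta by rewrite subr_ge0.
have e1 : (fun n => (1 - delta) ^+ n * MV) @ \oo --> (0:R).
  rewrite -(mul0r MV); apply: cvgM; last exact: cvg_cst.
  by apply: cvg_expr; rewrite ger0_norm // ltrBlDr ltrDl.
apply: (@squeeze_cvgr _ _ _ _ (fun n => - ((1 - delta) ^+ n * MV)) (fun n => (1 - delta) ^+ n * MV)).
- apply: nearW => n; have := b_bound mc n; rewrite ler_norml => /andP[h1 h2].
  have qn : 0 <= (1 - delta) ^+ n by rewrite exprn_ge0.
  by rewrite -mulrN !ler_wpM2l.
- by rewrite -oppr0; apply: cvgN.
- exact: e1.
Qed.

End Chains.




Section Final.
Variables (R : realType) (cX cY : markov_chain R).
Variables (C : mc_state cX -> mc_state cY -> R) (delta : R).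
Hypotheses (hC : forall x y, 0 <= C x y) (hd0 : 0 < delta) (hd1 : delta <= 1).
Local Notation X := (mc_state cX).
Local Notation Y := (mc_state cY).
Local Notation S := (X * Y)%type.

Lemma geo_sum n : \sum_(0 <= t < n) geom_law delta t = 1 - (1 - delta) ^+ n.
Proof.
elim: n => [|n IH]; first by rewrite big_mkord big_ord0 expr0 subrr.
by rewrite big_nat_recr //= IH /geom_law exprSr; ring.
Qed.

Lemma series_cvg (c : chain_on R X Y) : markovian_coupling c ->
  cvgn (series (fun t => geom_law delta t * expected_cost_at c C t)).
Proof.
move=> mc.
have E0 t : 0 <= expected_cost_at c C t.
  apply: sumr_ge0 => z _; apply: mulr_ge0; [exact: (law_dist mc t).1 | exact: hC].
have g0 t : 0 <= geom_law delta t.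
  by apply: mulr_ge0; [exact: ltW | apply: exprn_ge0; rewrite subr_ge0].
pose Ct := \sum_z Cz C z.
have Ct0 : 0 <= Ct by apply: sumr_ge0 => z _; exact: hC.
have EC t : expected_cost_at c C t <= Ct.
  have [L0 L1] := law_dist mc t.
  apply: (@le_trans _ _ (\sum_z chain_law c t z * Ct)); last by rewrite -big_distrl /= L1 mul1r.
  apply: ler_sum => z _; apply: ler_wpM2l => //.
  rewrite /Ct (bigD1 z) //= lerDl; apply: sumr_ge0 => w _; exact: hC.
apply: nondecreasing_is_cvgn.
  move=> n m nm; rewrite !seriesEnat /=.
  exact: (nondecreasing_series (fun k _ _ => mulr_ge0 (g0 k) (E0 k))).
exists Ct => _ [n _ <-].
rewrite seriesEnat /=.
apply: (@le_trans _ _ (\sum_(0 <= t < n) geom_law delta t * Ct)).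
  by apply: ler_sum => t _; apply: ler_wpM2l.
rewrite -big_distrl /= geo_sum; apply: ler_piMl => //.
by rewrite lerBlDr lerDl exprn_ge0 // subr_ge0.
Qed.
End Final.

Unset Implicit Arguments.
Theorem proposition14 (R : realType) (cX cY : markov_chain R)
  (C : mc_state cX -> mc_state cY -> R) (delta : R)
  (hC : forall x y, 0 <= C x y) (hd0 : 0 < delta) (hd1 : delta <= 1) :
  exists c : chain_on R (mc_state cX) (mc_state cY),
    homogeneous_markovian_coupling c /\
    cost_at_geometric_time c C delta = dWL_inf C delta /\
    (forall c' : chain_on R (mc_state cX) (mc_state cY),
        homogeneous_markovian_coupling c' ->
        cost_at_geometric_time c C delta <= cost_at_geometric_time c' C delta).
Proof.
have [p hp] := exists_fix C hd0 hd1.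
pose V := toF p.
have hV z : V z = delta * Cz C z + (1 - delta) * mval V z.
  by rewrite /V {1}hp /toF mxE enum_rankK.
have hMV z : `|V z| <= `|p| by exact: coord_le_norm.
have [pi0 [pi0c pi0min]] := coupling_min (mc_init_dist cX) (mc_init_dist cY) V.
pose cs := @ChainOn R (mc_state cX) (mc_state cY) pi0 (fun _ z => opt V z).
have hcs : homogeneous_markovian_coupling cs.
  split=> //; split=> // t x y; exact: (opt_coup V (x, y)).
have hK : forall t z, ch_kernel cs t z = opt V z by [].
have cost_cs : cost_at_geometric_time cs C delta = bV V cs 0.
  rewrite /cost_at_geometric_time; apply: cvg_lim => //.
  have -> : series (fun t => geom_law delta t * expected_cost_at cs C t) =
            (fun n => bV V cs 0 - (1 - delta) ^+ n * bV V cs n).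
    by apply: funext => n; rewrite (tele_eq hV hK n) addrK.
  rewrite -[X in _ --> X]subr0; apply: cvgB; first exact: cvg_cst.
  exact: (u_cvg hd0 hd1 hMV hcs.1).
have lower c : markovian_coupling c -> bV V cs 0 <= cost_at_geometric_time c C delta.
  move=> mc.
  apply: (@le_trans _ _ (bV V c 0)); first exact: pi0min mc.1.
  have cS := series_cvg hC hd0 hd1 mc.
  have cw : (fun n => series (fun t => geom_law delta t * expected_cost_at c C t) n
                 + (1 - delta) ^+ n * bV V c n) @ \oo -->
            cost_at_geometric_time c C delta + 0.
    apply: cvgD; first exact: cS.
    exact: (u_cvg hd0 hd1 hMV mc).
  rewrite -[leRHS]addr0 -(cvg_lim _ cw) //.
  apply: limr_ge; first by apply/cvg_ex; eexists; exact: cw.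
  by apply: nearW => n; apply: tele_le.
exists cs; split=> //; split; last first.
  by move=> c' [mc' _]; rewrite cost_cs; exact: lower.
rewrite /dWL_inf; apply/esym/le_anti/andP; split.
  apply: ge_inf; first by exists (bV V cs 0) => _ [c [mc ->]]; exact: lower.
  by exists cs; split => //; exact: hcs.1.
apply: lb_le_inf.
  by exists (cost_at_geometric_time cs C delta), cs; split => //; exact: hcs.1.
by move=> _ [c [mc ->]]; rewrite cost_cs; exact: lower.
Qed.
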